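(* Let $P>0$, $v\ge2$, and let $\Gamma'_{T_1},\Gamma'_{T_2},\Gamma'_R,\Gamma''_{T_1},\Gamma''_{T_2}\ge0$ with $\Gamma'_{T_1}=\Gamma'_{T_2}$ and $\Gamma''_{T_1}=\Gamma''_{T_2}$. Set $B_i=\Gamma''_{T_i}+2\Gamma'_{T_i}+1$ and $C_i=(\Gamma'_R+1)(\Gamma'_{T_i}+1)$ for $i=1,2$. For $(\omega,D)\in(0,1)^2$ let $\bar\gamma_1=P(1-D)^{-v}$, $\bar\gamma_2=PD^{-v}$ and $$\mathcal L(\omega,D)=\frac{B_2-B_1}{\bar\gamma_2}+\frac{B_1+C_1}{\omega\bar\gamma_2}+\frac{B_1-B_2}{\bar\gamma_1}+\frac{B_2+C_2}{(1-\omega)\bar\gamma_1}.$$ Then $(\omega,D)=(1/2,1/2)$ is a global minimizer of $\mathcal L$ over $(0,1)^2$.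
   Context: $\mathcal L$ is (up to a positive factor) the high-SNR asymptotic protocol outage probability of a three-phase two-way relay network as a function of the relay power-allocation coefficient $\omega$ and relay position $D$ (the relay lies on the segment between terminals at normalized distance $1$, at distance $1-D$ from $T_1$ and $D$ from $T_2$); $v$ is the path-loss exponent and $\Gamma'_N,\Gamma''_N$ are the first and second moments of the interference power at node $N$. *)

(* Defs.v *)
From Stdlib Require Import Reals.
Open Scope R_scope.

Definition Bcoef (G1 G2 : R) : R := G2 + 2 * G1 + 1.
Definition Ccoef (GR G1 : R) : R := (GR + 1) * (G1 + 1).

(* average SNRs; v is a real path-loss exponent, hence Rpower *)
Definition gbar1 (P v D : R) : R := P * Rpower (1 - D) (- v).
Definition gbar2 (P v D : R) : R := P * Rpower D (- v).

Definition Lfun (P v G1T1 G1T2 G1R G2T1 G2T2 w D : R) : R :=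
  let B1 := Bcoef G1T1 G2T1 in
  let B2 := Bcoef G1T2 G2T2 in
  let C1 := Ccoef G1R G1T1 in
  let C2 := Ccoef G1R G1T2 in
  (B2 - B1) / gbar2 P v D + (B1 + C1) / (w * gbar2 P v D)
  + (B1 - B2) / gbar1 P v D + (B2 + C2) / ((1 - w) * gbar1 P v D).

(* Main.v *)
Require Import Defs.
From Stdlib Require Import Reals Lra Psatz.
Open Scope R_scope.

Lemma ln_le_sub1 x : 0 < x -> ln x <= x - 1.
Proof. intro H. pose proof (exp_ineq1_le (ln x)). rewrite exp_ln in H0 by lra. lra. Qed.

Lemma Rpower_pos y p : 0 < Rpower y p.
Proof. unfold Rpower. apply exp_pos. Qed.

Lemma bernoulli y p : 0 < y -> 1 <= p -> 1 + p * (y - 1) <= Rpower y p.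
Proof.
  intros Hy Hp.
  set (z := Rpower y p). assert (Hz : 0 < z) by apply Rpower_pos.
  set (q := / p). assert (Hq0 : 0 < q) by (apply Rinv_0_lt_compat; lra).
  assert (Hq1 : q <= 1). { unfold q. rewrite <- Rinv_1. apply Rinv_le_contravar; lra. }
  set (s := q * z + 1 - q). assert (Hs : 0 < s) by (unfold s; nra).
  assert (Hlz : ln z = p * ln y) by (unfold z; apply ln_Rpower).
  assert (H1 : ln (z / s) <= z / s - 1) by (apply ln_le_sub1; apply Rdiv_lt_0_compat; lra).
  assert (H2 : ln (/ s) <= / s - 1) by (apply ln_le_sub1; apply Rinv_0_lt_compat; lra).
  unfold Rdiv in H1. rewrite ln_mult in H1 by (try apply Rinv_0_lt_compat; lra).
  rewrite ln_Rinv in H1, H2 by lra.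
  assert (H3 : q * (z * / s - 1) + (1 - q) * (/ s - 1) = 0).
  { assert (Hd : q * z + (1 - q) = s) by (unfold s; ring).
    replace (q * (z * / s - 1) + (1 - q) * (/ s - 1)) with ((q * z + (1 - q)) * / s - 1) by ring.
    rewrite Hd. field. lra. }
  assert (H4 : q * ln z <= ln s).
  { pose proof (Rmult_le_compat_l q _ _ (Rlt_le _ _ Hq0) H1).
    assert (0 <= 1 - q) by lra.
    pose proof (Rmult_le_compat_l (1 - q) _ _ H0 H2). lra. }
  assert (H5 : ln y <= ln s).
  { rewrite Hlz in H4. replace (q * (p * ln y)) with (ln y) in H4 by (unfold q; field; lra). exact H4. }
  assert (H6 : y <= s).
  { destruct (Rle_or_lt y s) as [h|h]; auto. pose proof (ln_increasing s y Hs h). lra. }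
  unfold s in H6. assert (p * y <= p * (q * z + 1 - q)) by nra.
  replace (p * (q * z + 1 - q)) with (z + p - 1) in H by (unfold q; field; lra).
  lra.
Qed.

Lemma Rpower_sq x p : 0 < x -> Rpower x p = Rpower x (p/2) * Rpower x (p/2).
Proof. intro. rewrite <- Rpower_plus. f_equal. field. Qed.

Lemma half_bound D p : 0 < D < 1 -> 1 <= p ->
  2 * Rpower (1/2) p <= Rpower D p + Rpower (1 - D) p.
Proof.
  intros HD Hp.
  assert (E1 : Rpower D p = Rpower (1/2) p * Rpower (2 * D) p).
  { rewrite Rpower_mult_distr by lra. f_equal. field. }
  assert (E2 : Rpower (1 - D) p = Rpower (1/2) p * Rpower (2 * (1 - D)) p).
  { rewrite Rpower_mult_distr by lra. f_equal. field. }
  pose proof (bernoulli (2 * D) p ltac:(lra) Hp).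
  pose proof (bernoulli (2 * (1 - D)) p ltac:(lra) Hp).
  pose proof (Rpower_pos (1/2) p).
  rewrite E1, E2. nra.
Qed.

Theorem corollary1 (P v G1T1 G1T2 G1R G2T1 G2T2 : R) :
  0 < P -> 2 <= v ->
  0 <= G1T1 -> 0 <= G1T2 -> 0 <= G1R -> 0 <= G2T1 -> 0 <= G2T2 ->
  G1T1 = G1T2 -> G2T1 = G2T2 ->
  forall w D : R, 0 < w < 1 -> 0 < D < 1 ->
    Lfun P v G1T1 G1T2 G1R G2T1 G2T2 (1/2) (1/2)
    <= Lfun P v G1T1 G1T2 G1R G2T1 G2T2 w D.
Proof.
  intros HP Hv H1 H2 H3 H4 H5 E1 E2 w D Hw HD.
  subst G1T2 G2T2.
  unfold Lfun, gbar1, gbar2.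
  assert (HB : 1 <= Bcoef G1T1 G2T1) by (unfold Bcoef; lra).
  assert (HC : 1 <= Ccoef G1R G1T1) by (unfold Ccoef; nra).
  set (K := Bcoef G1T1 G2T1 + Ccoef G1R G1T1).
  assert (HK : 0 < K) by (unfold K; lra).
  rewrite !Rminus_diag.
  replace (1 - 1/2) with (1/2) by field.
  rewrite !Rpower_Ropp.
  rewrite (Rpower_sq (1/2) v), (Rpower_sq D v), (Rpower_sq (1 - D) v) by lra.
  pose proof (half_bound D (v/2) HD ltac:(lra)) as Hb.
  set (h := Rpower (1/2) (v/2)) in *.
  set (a := Rpower D (v/2)) in *.
  set (b := Rpower (1 - D) (v/2)) in *.
  assert (Hh : 0 < h) by apply Rpower_pos.
  assert (Ha : 0 < a) by apply Rpower_pos.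
  assert (Hb' : 0 < b) by apply Rpower_pos.
  replace (0 / (P * / (h * h)) + K / (1 / 2 * (P * / (h * h))) + 0 / (P * / (h * h)) +
           K / (1 / 2 * (P * / (h * h)))) with (K / P * (4 * (h * h))) by (field; lra).
  replace (0 / (P * / (a * a)) + K / (w * (P * / (a * a))) + 0 / (P * / (b * b)) +
           K / ((1 - w) * (P * / (b * b)))) with (K / P * (a * a / w + b * b / (1 - w)))
    by (field; repeat split; lra).
  apply Rmult_le_compat_l.
  { apply Rlt_le, Rdiv_lt_0_compat; lra. }
  assert (CS : (a + b) * (a + b) <= a * a / w + b * b / (1 - w)).
  { assert (a * a / w + b * b / (1 - w) - (a + b) * (a + b) =
            (a * (1 - w) - b * w) * (a * (1 - w) - b * w) / (w * (1 - w))) by (field; lra).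
    assert (0 <= (a * (1 - w) - b * w) * (a * (1 - w) - b * w) / (w * (1 - w))).
    { unfold Rdiv. apply Rmult_le_pos. apply Rle_0_sqr. apply Rlt_le, Rinv_0_lt_compat. nra. }
    lra. }
  nra.
Qed.
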